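(* Let $\beta_0,\beta_1,\beta_2,\beta_3,\beta_4\in\mathbb{R}$, and put $$L^{+}:=\sqrt{(\beta_1+\beta_4)^2+(\beta_2-\beta_3)^2},\qquad L^{-}:=\sqrt{(\beta_1-\beta_4)^2+(\beta_2+\beta_3)^2}.$$ Let $\rho$ be a generalised two-qubit $X$-state of Group 2 of Type I with maximally-mixed subsystems ($\tau_1=\tau_2=0$) and these parameters, so that the eigenvalues of $\rho$ are $\tfrac14(1+\beta_0\pm L^{-})$, $\tfrac14(1-\beta_0\pm L^{+})$. Suppose $\rho$ is valid and entangled. Then $\beta_0<0$ if and only if $L^{+}>L^{-}$.
   Context: A two-qubit Hermitian $4\times4$ matrix $\rho$ of trace one is called valid if it is positive semidefinite. For a valid $\rho$, $\rho^{\Gamma}$ denotes its partial transpose (with respect to either qubit). $\rho$ is called separable if $\rho^{\Gamma}$ is positive semidefinite and entangled otherwise (PPT criterion). Group 2 $X$-states are two-qubit density matrices of the form $\rho=\tfrac14(I\otimes I+\sum_{q}c_q\,q)$, where $q$ ranges over the seven nontrivial Pauli operators commuting with a fixed operator $A\otimes B$ with $A,B\in\{X,Y,Z\}$. Example: for $A\otimes B=Z\otimes Z$, $\rho=\tfrac14(I\otimes I+\tau_1 Z\otimes I+\tau_2 I\otimes Z+\beta_0 Z\otimes Z+\beta_1 X\otimes X+\beta_2 X\otimes Y+\beta_3 Y\otimes X+\beta_4 Y\otimes Y)$. In general $\tau_1,\tau_2$ are the coefficients of the two local operators, $\beta_0$ is the coefficient of the correlation operator sharing no tensor factor with the other correlation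 operators, and $\beta_1,\beta_2,\beta_3,\beta_4$ are the entries of the remaining $2\times2$ block $\begin{pmatrix}\beta_1&\beta_2\\ \beta_3&\beta_4\end{pmatrix}$ of the correlation matrix. ''Maximally-mixed subsystems'' means $\tau_1=\tau_2=0$. Such a state with $\tau_1=\tau_2=0$ is of Type I if the eigenvalues of $\rho$ are $\tfrac14(1+\beta_0\pm L^{-})$ and $\tfrac14(1-\beta_0\pm L^{+})$, and the eigenvalues of $\rho^{\Gamma}$ are $\tfrac14(1+\beta_0\pm L^{+})$ and $\tfrac14(1-\beta_0\pm L^{-})$. The $Z\otimes Z$ example above is of Type I. *)

(* Defs.v *)
From HB Require Import structures.
From mathcomp Require Import all_boot all_order all_algebra.
From mathcomp Require Import reals.
From mathcomp Require Import complex.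
Set Implicit Arguments. Unset Strict Implicit. Unset Printing Implicit Defensive.
Import Order.TTheory GRing.Theory Num.Theory.
Local Open Scope ring_scope.

Inductive axis := AX | AY | AZ.

Section Qubits.
Variable R : realType.
Local Notation C := (R[i]).

Definition pauliI : 'M[C]_2 := 1%:M.
Definition pauli (a : axis) : 'M[C]_2 :=
  match a with
  | AX => \matrix_(i < 2, j < 2) (if i == j then 0 else 1)
  | AY => \matrix_(i < 2, j < 2)
            (if i == j then 0 else if (i : nat) == 0%N then - 'i else 'i)%C
  | AZ => \matrix_(i < 2, j < 2)
            (if i == j then (if (i : nat) == 0%N then 1 else -1) else 0)
  end.

(* Two-qubit indexing: basis index k of C^4 = C^2 (x) C^2 is k = 2 a + b. *)
Definition q1 (k : 'I_4) : 'I_2 := inord (k %/ 2).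
Definition q2 (k : 'I_4) : 'I_2 := inord (k %% 2).
Definition idx2 (a b : 'I_2) : 'I_4 := inord (2 * a + b).

Definition kron2 (A B : 'M[C]_2) : 'M[C]_4 :=
  \matrix_(k, l) (A (q1 k) (q1 l) * B (q2 k) (q2 l)).

Definition ptrans (M : 'M[C]_4) : 'M[C]_4 :=
  \matrix_(k, l) M (idx2 (q1 k) (q2 l)) (idx2 (q1 l) (q2 k)).

Definition adjmx (M : 'M[C]_4) : 'M[C]_4 := \matrix_(k, l) ((M l k)^*)%C.

Definition hermitian (M : 'M[C]_4) : Prop := adjmx M = M.

Definition dagv (v : 'cV[C]_4) : 'rV[C]_4 := \row_k ((v k 0)^*)%C.

(* Positive semidefinite: Hermitian with v^dagger M v >= 0 for all v
   (in the ordered field R[i], 0 <= z means z is real and nonnegative). *)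
Definition psd (M : 'M[C]_4) : Prop :=
  hermitian M /\ forall v : 'cV[C]_4, 0 <= (dagv v *m M *m v) 0 0.

Definition valid (rho : 'M[C]_4) : Prop :=
  hermitian rho /\ \tr rho = 1 /\ psd rho.

(* PPT criterion: separable iff rho^Gamma is PSD, entangled otherwise. *)
Definition separable (rho : 'M[C]_4) : Prop := psd (ptrans rho).
Definition entangled (rho : 'M[C]_4) : Prop := ~ psd (ptrans rho).

Definition nxt (a : axis) : axis :=
  match a with AX => AY | AY => AZ | AZ => AX end.

Definition group2_state (a b : axis) (t1 t2 b0 b1 b2 b3 b4 : R) : 'M[C]_4 :=
  let a1 := nxt a in let a2 := nxt (nxt a) in
  let b1' := nxt b in let b2' := nxt (nxt b) in
  (4%:R)^-1 *: (kron2 pauliI pauliI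
     + (t1%:C)%C *: kron2 (pauli a) pauliI
     + (t2%:C)%C *: kron2 pauliI (pauli b)
     + (b0%:C)%C *: kron2 (pauli a) (pauli b)
     + (b1%:C)%C *: kron2 (pauli a1) (pauli b1')
     + (b2%:C)%C *: kron2 (pauli a1) (pauli b2')
     + (b3%:C)%C *: kron2 (pauli a2) (pauli b1')
     + (b4%:C)%C *: kron2 (pauli a2) (pauli b2')).

Definition Lplus (b1 b2 b3 b4 : R) : R :=
  Num.sqrt ((b1 + b4) ^+ 2 + (b2 - b3) ^+ 2).
Definition Lminus (b1 b2 b3 b4 : R) : R :=
  Num.sqrt ((b1 - b4) ^+ 2 + (b2 + b3) ^+ 2).

Definition has_eigenvalues (M : 'M[C]_4) (s : seq R) : Prop :=
  char_poly M = \prod_(l <- s) ('X - ((l%:C)%C)%:P).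

(* Type I (for tau1 = tau2 = 0): spectra of rho and rho^Gamma. *)
Definition typeI (rho : 'M[C]_4) (b0 Lp Lm : R) : Prop :=
  has_eigenvalues rho
    [:: (1 + b0 + Lm) / 4%:R; (1 + b0 - Lm) / 4%:R;
        (1 - b0 + Lp) / 4%:R; (1 - b0 - Lp) / 4%:R]
  /\ has_eigenvalues (ptrans rho)
    [:: (1 + b0 + Lp) / 4%:R; (1 + b0 - Lp) / 4%:R;
        (1 - b0 + Lm) / 4%:R; (1 - b0 - Lm) / 4%:R].

End Qubits.

(* Main.v *)
Require Import Defs.
From HB Require Import structures.
From mathcomp Require Import all_boot all_order all_algebra.
From mathcomp Require Import reals complex spectral sesquilinear mxred.
From mathcomp Require Import ring lra.
Import Order.TTheory GRing.Theory Num.Theory.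
Local Open Scope ring_scope.
Local Open Scope sesquilinear_scope.
Section S.
Variable R : realType.
Local Notation C := (R[i]).

Lemma herm_tc (M : 'M[C]_4) : Defs.hermitian M -> map_mx Num.conj (trmx M) = M.
Proof.
move=> hM; rewrite -{2}hM; apply/matrixP => k l; rewrite !mxE; reflexivity.
Qed.

Lemma dagv_mul (P : 'M[C]_4) (v : 'cV[C]_4) :
  dagv v *m map_mx Num.conj (trmx P) = dagv (P *m v).
Proof.
apply/matrixP => i j; rewrite !mxE rmorph_sum; apply: eq_bigr => k _.
rewrite !mxE rmorphM /= mulrC. reflexivity.
Qed.

Lemma quad_diag (d : 'rV[C]_4) (w : 'cV[C]_4) :
  (dagv w *m diag_mx d *m w) 0 0 = \sum_i d 0 i * ((w i 0)^*)%C * w i 0.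
Proof.
rewrite mul_mx_diag !mxE; apply: eq_bigr => k _; rewrite !mxE; ring.
Qed.

Lemma roots_M (M : 'M[C]_4) (x : C) : Defs.hermitian M ->
  root (char_poly M) x = (x \in [seq spectral_diag M 0 i | i <- enum 'I_4]).
Proof.
move=> hM.
have nM : M \is normalmx by apply/normalmxP; rewrite herm_tc.
set P := spectralmx M; set d := spectral_diag M.
have Pu : P \in unitmx by apply: spectral_unit.
have eM : M = invmx P *m diag_mx d *m P by apply/orthomx_spectralP.
have sim : similar P M (diag_mx d).
  apply/similarP => //. rewrite {1}eM !mulmxA mulmxV // mul1mx //.
rewrite -root_mxminpoly (similar_mxminpoly Pu sim) root_mxminpoly.
rewrite char_poly_trig ?diag_mx_is_trig //.
rewrite -root_prod_XsubC big_map big_enum /=.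
by under eq_bigr => i _ do rewrite mxE eqxx mulr1n.
Qed.

Lemma quad_M (M : 'M[C]_4) (v : 'cV[C]_4) : Defs.hermitian M ->
  (dagv v *m M *m v) 0 0 = \sum_i spectral_diag M 0 i *
      (((spectralmx M *m v) i 0)^*)%C * (spectralmx M *m v) i 0.
Proof.
move=> hM.
have nM : M \is normalmx by apply/normalmxP; rewrite herm_tc.
set P := spectralmx M; set d := spectral_diag M.
have Pu : P \is unitarymx by apply: spectral_unitarymx.
have eM : M = invmx P *m diag_mx d *m P by apply/orthomx_spectralP.
rewrite -quad_diag -dagv_mul {1}eM invmx_unitary // !mulmxA //.
Qed.

Lemma key (M : 'M[C]_4) (s : seq R) : Defs.hermitian M ->
  char_poly M = \prod_(l <- s) ('X - ((l%:C)%C)%:P) ->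
  (psd M <-> forall l, l \in s -> 0 <= l).
Proof.
move=> hM hc.
have rts : forall x : C, (x \in [seq (l%:C)%C | l <- s]) =
    (x \in [seq spectral_diag M 0 i | i <- enum 'I_4]).
  by move=> x; rewrite -roots_M // hc -root_prod_XsubC big_map.
set P := spectralmx M; set d := spectral_diag M.
have Pu : P \is unitarymx by apply: spectral_unitarymx.
split.
- move=> [_ hq] l ls.
  have : (l%:C)%C \in [seq d 0 i | i <- enum 'I_4].
    by rewrite -rts; apply: map_f.
  case/mapP => i _ eli.
  have := hq (map_mx Num.conj (trmx P) *m delta_mx i 0).
  rewrite quad_M // mulmxA.
  move/unitarymxP: Pu => ->; rewrite mul1mx.
  rewrite (bigD1 i) //= big1 ?addr0.
  + rewrite !mxE !eqxx /=.
    have -> : (1 -i* 0)%C = 1 :> C by apply/eqP; rewrite eq_complex /= oppr0 !eqxx.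
    by rewrite !mulr1 -/d -eli ler0c.
  + by move=> j /negbTE nji; rewrite !mxE nji /= mulr0.
- move=> hs; split => // v.
  rewrite quad_M //; apply: sumr_ge0 => i _.
  have : d 0 i \in [seq (l%:C)%C | l <- s] by rewrite rts; apply: map_f; rewrite mem_enum.
  case/mapP => l ls ->.
  rewrite -mulrA mulr_ge0 ?ler0c ?hs //.
  rewrite mulrC; exact: mul_conjC_ge0.
Qed.

Lemma ptrans_herm (M : 'M[C]_4) : Defs.hermitian M -> Defs.hermitian (ptrans M).
Proof.
move=> hM; apply/matrixP => k l; rewrite !mxE.
by rewrite -{2}hM mxE.
Qed.
End S.

Theorem proposition1 (R : realType) (a b : axis) (b0 b1 b2 b3 b4 : R) :
  let rho := group2_state a b 0 0 b0 b1 b2 b3 b4 in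
  let Lp := Lplus b1 b2 b3 b4 in
  let Lm := Lminus b1 b2 b3 b4 in
  typeI rho b0 Lp Lm ->
  valid rho ->
  entangled rho ->
  (b0 < 0 <-> Lm < Lp).
Proof.
move=> rho Lp Lm [h1 h2] [hH [_ hpsd]] hent.
have Lp0 : 0 <= Lp by apply: sqrtr_ge0.
have Lm0 : 0 <= Lm by apply: sqrtr_ge0.
have := (@key R _ _ hH h1).1 hpsd.
move=> hs.
have e2 : 0 <= (1 + b0 - Lm) / 4 by apply: hs; rewrite !inE eqxx !orbT.
have e4 : 0 <= (1 - b0 - Lp) / 4 by apply: hs; rewrite !inE eqxx !orbT.
have nn : ~ (0 <= (1 + b0 - Lp) / 4 /\ 0 <= (1 - b0 - Lm) / 4).
  move=> [f2 f4]; apply: hent; apply/(@key R _ _ (@ptrans_herm R _ hH) h2) => l.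
  rewrite !inE => /or4P [] /eqP -> //; apply: divr_ge0 => //; lra.
have c4 : (0 : R) < 4 by [].
case: (lerP 0 ((1 + b0 - Lp) / 4)) => f2;
case: (lerP 0 ((1 - b0 - Lm) / 4)) => f4; first by exfalso; apply: nn.
all: split => H; lra.
Qed.
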